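(* Let $k\ge 1$ be such that $p=2k+1$ is a prime with $p\ne 3$. Then in $\mathbb{F}_p[q]$: (1) $\gcd(q^{p-1}-1,\,P_{k-1}(q))$ divides $q^4-1$; (2) $\gcd(q^{p+1}-1,\,P_{k-1}(q))$ divides $(q^4-1)(q^3-1)$.
   Context: $P_{k-1}(q)=1+\sum_{l=1}^{k} q^{4l-4}(q^4-q^3-q^2-q)$, reduced modulo $p$. Also $Q_{k-1}(q)=(q^4-1)P_{k-1}(q)=q^{4k+4}-q^{4k+3}-q^{4k+2}-q^{4k+1}+q^3+q^2+q-1$. *)

(* Defs.v *)
From HB Require Import structures.
From mathcomp Require Import all_boot all_order all_algebra all_field.
Set Implicit Arguments. Unset Strict Implicit. Unset Printing Implicit Defensive.
Import GRing.Theory.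
Local Open Scope ring_scope.

(* The paper's P_{k-1}(q) = 1 + sum_{l=1}^{k} q^{4l-4}(q^4-q^3-q^2-q),
   as a polynomial over an arbitrary ring R (R = 'F_p gives the reduction mod p). *)
Definition P_pred (R : nzRingType) (k : nat) : {poly R} :=
  1 + \sum_(1 <= l < k.+1) 'X^(4 * l - 4) * ('X^4 - 'X^3 - 'X^2 - 'X).

(* Main.v *)
Require Import Defs.
From HB Require Import structures.
From mathcomp Require Import all_boot all_order all_algebra all_field.
From Stdlib Require Import Lia.
Import GRing.Theory.
Local Open Scope ring_scope.

Section S.
Variable R : comNzRingType.
Implicit Types x y P T : R.
Lemma c3 x : (x-1)*(x^+2+x+1) = x^+3-1.
Proof.
rewrite mulrBl mul1r !mulrDr mulr1 -expr2 -exprS.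
by rewrite -(addrA (x^+3)) addrKA.
Qed.
Lemma c4 x : (x-1)*(x^+3+x^+2+x+1) = x^+4-1.
Proof.
rewrite mulrBl mul1r !mulrDr mulr1 -expr2 -!exprS.
by rewrite -(addrA (x^+4)) -(addrA (x^+4)) addrKA.
Qed.
Lemma eT x : x * (x^+3 - x^+2 - x - 1) = x^+4 - x^+3 - x^+2 - x.
Proof. by rewrite !mulrBr mulr1 -expr2 -!exprS. Qed.
Lemma eY y a : a * y - 1 = (y - 1) * a + (a - 1).
Proof. by rewrite mulrBl mul1r addrA subrK mulrC. Qed.
Lemma eS x : x^+3 - x^+2 - x - 1 = x^+3 - (x^+2 + x + 1).
Proof. by rewrite !opprD !addrA. Qed.

Lemma stepA' (x4 y P T : R) :
  (x4 - 1) * P = (x4 - 1) + (y - 1) * T ->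
  (x4 - 1) * (P + y * T) = (x4 - 1) + (x4 * y - 1) * T.
Proof.
move=> H; rewrite mulrDr H -addrA; congr (_ + _).
by rewrite mulrA -mulrDl mulrBl mul1r addrC addrA subrK.
Qed.

Lemma idB x y P :
  (x^+4 - 1) * P = (x^+4 - 1) + (y - 1) * (x^+4 - x^+3 - x^+2 - x) ->
  x^+3 * ((x^+4 - 1) * P) =
  (x^+3 - 1) * (x^+3 + x^+2 + x + 1) + (x^+4 * y - 1) * (x^+3 - x^+2 - x - 1).
Proof.
move=> H; rewrite H -eT mulrDr.
set S := x^+3 - x^+2 - x - 1.
have e1 : x^+3 * ((y-1)*(x*S)) = (y-1)*(x^+4*S).
  by rewrite mulrCA (mulrA (x^+3)) -exprSr.
have e2 : (x^+3 - 1) * (x^+3 + x^+2 + x + 1) = (x^+4 - 1) * (x^+2 + x + 1).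
  by rewrite -c3 -c4 mulrAC.
rewrite e1 e2 (eY y (x^+4)) (mulrDl ((y-1)*x^+4) (x^+4-1) S) -(mulrA (y-1)).
rewrite (addrCA ((x ^+ 4 - 1) * (x ^+ 2 + x + 1))) -(mulrDr (x^+4-1)).
have e3 : x^+2+x+1+S = x^+3 by rewrite /S eS addrC subrK.
by rewrite e3 addrC mulrC.
Qed.
End S.
Section S2.
Variable R : comNzRingType.
Lemma idsq (z : R) : z * z - 1 = (z - 1) * (z + 1).
Proof. by rewrite mulrDr mulr1 !mulrBl mul1r addrA subrK. Qed.
Lemma idC (x : R) : (x^+4 - 1) * (x^+3 - 1) = ((x^+3 - 1) * (x^+3 + x^+2 + x + 1)) * (x - 1).
Proof. by rewrite -c4 [LHS]mulrC -mulrA (mulrC (x-1)). Qed.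
End S2.


Lemma idA (F : comNzRingType) (k : nat) :
  ('X^4 - 1) * P_pred F k = ('X^4 - 1) + ('X^(4 * k) - 1) * ('X^4 - 'X^3 - 'X^2 - 'X).
Proof.
elim: k => [|k IH].
  by rewrite /P_pred big_geq // addr0 mulr1 muln0 expr0 subrr mul0r addr0.
rewrite /P_pred big_nat_recr //= (addrA 1) -/(P_pred F k).
have -> : (4 * k.+1 - 4 = 4 * k)%N by rewrite mulnS addKn.
by rewrite mulnS exprD; apply: stepA'.
Qed.

Theorem mainTheorem14 (k : nat) (hk : (1 <= k)%N) (hp : prime (2 * k + 1))
    (hp3 : (2 * k + 1 != 3)%N) :
  (gcdp ('X^((2 * k + 1).-1) - 1) (P_pred 'F_(2 * k + 1) k)
     %| 'X^4 - 1)
  /\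
  (gcdp ('X^((2 * k + 1).+1) - 1) (P_pred 'F_(2 * k + 1) k)
     %| ('X^4 - 1) * ('X^3 - 1)).
Proof.
have -> : (2 * k + 1).-1 = (2 * k)%N by rewrite addn1.
set F := 'F_(2 * k + 1).
have hA := idA F k.
split.
- set g := gcdp _ _.
  have h1 : g %| 'X^(2 * k) - 1 by exact: dvdp_gcdl.
  have h2 : g %| P_pred F k by exact: dvdp_gcdr.
  have h3 : g %| ('X^(4 * k) - 1) * ('X^4 - 'X^3 - 'X^2 - 'X).
    apply: dvdp_mulr.
    have -> : (4 * k = 2 * k + 2 * k)%N by rewrite -mulnDl.
    rewrite exprD idsq; apply: dvdp_mulr.
    by [].
  have h4 : g %| ('X^4 - 1) * P_pred F k by apply: dvdp_mull.
  by move: h4; rewrite hA (dvdp_addl _ h3).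
- set g := gcdp _ _.
  have h1 : g %| 'X^((2 * k + 1).+1) - 1 by exact: dvdp_gcdl.
  have h2 : g %| P_pred F k by exact: dvdp_gcdr.
  have h3 : g %| ('X^4 * 'X^(4 * k) - 1) * ('X^3 - 'X^2 - 'X - 1).
    apply: dvdp_mulr.
    have -> : 'X^4 * 'X^(4 * k) = 'X^((2 * k + 1).+1) * 'X^((2 * k + 1).+1) :> {poly F}.
      have E : (4 + 4*k = (2*k+1).+1 + (2*k+1).+1)%N by rewrite -?plusE -?multE; lia.
      by rewrite -!exprD E.
    by rewrite idsq; apply: dvdp_mulr.
  have h4 : g %| 'X^3 * (('X^4 - 1) * P_pred F k) by apply: dvdp_mull; apply: dvdp_mull.
  move: h4; rewrite (@idB _ _ _ _ hA) (dvdp_addl _ h3) => h5.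
  rewrite idC; apply: (dvdp_trans h5).
  exact: (dvdp_mulr _ (dvdpp _)).
Qed.
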